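(* Let $p\in J$ and let $p=a_Iq_I+a_Jq_J$ (with $a_I+a_J=1$) be a two-point splitting that is optimal at $p$, i.e. attains the maximum in $V_\delta(p)=\max_{\mu\in\mathcal{S}(p)}\{(1-\delta)\mu(\{q\in I\})+\delta\,\mathbb{E}_\mu[V_\delta(\phi(q))]\}$. If $a_I>0$ and $a_J>0$, then (1) $V_\delta$ is affine on the segment $[q_I,q_J]$; and (2) for every $p'\in[q_I,q_J]$, the splitting of $p'$ between $q_I$ and $q_J$ (with the weights determined by $p'$) is optimal at $p'$.
   Context: Let $\Omega$ be a finite set, identify each $\omega$ with a unit vector of $\mathbb{R}^\Omega$ and $\Delta(\Omega)$ with the unit simplex. Let $M$ be the transition matrix of an irreducible Markov chain on $\Omega$, $r:\Omega\to\mathbb{R}$, $\delta\in[0,1)$, $\phi(q)=qM$. $I=\{p:\sum_\omega p(\omega)r(\omega)\ge0\}$, $J=\Delta(\Omega)\setminus I$. $\mathcal{S}(p)$ is the set of Borel probability measures on $\Delta(\Omega)$ with mean $p$; a decomposition $p=a_Iq_I+a_Jq_J$ is identified with the measure giving weight $a_I$ to $q_I$ and $a_J$ to $q_J$. $V_\delta$ is the value of the advisor's problem (at each stage choose $\mu\in\mathcal{S}(p_n)$, draw $q_n\sim\mu$, receive $\mathbf{1}_{\{q_n\in I\}}$, move to $p_{n+1}=\phi(q_n)$, payoff $\mathbb{E}[(1-\delta)\sum_n\delta^{n-1}\mathbf{1}_{\{q_n\in I\}}]$), the unique solution of the dynamic programming equation in the claim. *)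

(* Defs.v *)
From HB Require Import structures.
From mathcomp Require Import all_boot all_order all_algebra.
From mathcomp Require Import all_classical all_reals all_analysis.
Set Implicit Arguments. Unset Strict Implicit. Unset Printing Implicit Defensive.
Import Order.TTheory GRing.Theory Num.Theory numFieldNormedType.Exports.
Local Open Scope classical_set_scope.
Local Open Scope ring_scope.

Section Defs.
Variables (Omega : finType) (R : realType).

(* R^Omega with the product (= Euclidean) topology and its Borel sigma-algebra *)
Definition RO := {ptws Omega -> R}%type.
Definition BorelRO := g_sigma_algebraType (@open RO).

Definition simplex : set (Omega -> R) :=
  [set q | (forall w, 0 <= q w) /\ \sum_w q w = 1].

Definition stochastic (M : Omega -> Omega -> R) :=
  (forall w w', 0 <= M w w') /\ (forall w, \sum_w' M w w' = 1).

Fixpoint mpow (M : Omega -> Omega -> R) (n : nat) : Omega -> Omega -> R :=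
  match n with
  | 0%N => fun w w' => (w == w')%:R
  | k.+1 => fun w w' => \sum_v mpow M k w v * M v w'
  end.

Definition irreducible (M : Omega -> Omega -> R) :=
  forall w w', exists n, 0 < mpow M n w w'.

Definition phi (M : Omega -> Omega -> R) (q : Omega -> R) : Omega -> R :=
  fun w' => \sum_w q w * M w w'.

(* I = {p | sum_w p(w) r(w) >= 0} (boolean), J = simplex \ I *)
Definition inI (r : Omega -> R) (q : Omega -> R) : bool := 0 <= \sum_w q w * r w.
Definition Iset (r : Omega -> R) : set (Omega -> R) := [set q | inI r q].

(* S(p): Borel probability measures on Delta(Omega) (i.e. concentrated on the
   simplex) with mean p *)
Definition Sp (p : Omega -> R) (mu : probability BorelRO R) :=
  mu (simplex : set BorelRO) = 1%E /\
  forall w, (\int[mu]_(q in (simplex : set BorelRO)) (q w)%:E = (p w)%:E)%E.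

Definition payoff (M : Omega -> Omega -> R) (r : Omega -> R) (delta : R)
  (V : (Omega -> R) -> R) (mu : probability BorelRO R) : \bar R :=
  ((1 - delta)%:E * mu ((Iset r `&` simplex) : set BorelRO)
   + delta%:E * \int[mu]_(q in (simplex : set BorelRO)) (V (phi M q))%:E)%E.

Definition DP_solution (M : Omega -> Omega -> R) (r : Omega -> R) (delta : R)
  (V : (Omega -> R) -> R) :=
  forall p, simplex p ->
    (forall mu, Sp p mu -> (payoff M r delta V mu <= (V p)%:E)%E) /\
    (exists mu, Sp p mu /\ payoff M r delta V mu = (V p)%:E).

Definition point_value (M : Omega -> Omega -> R) (r : Omega -> R) (delta : R)
  (V : (Omega -> R) -> R) (q : Omega -> R) : R :=
  (1 - delta) * (inI r q)%:R + delta * V (phi M q).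

(* value of the splitting giving weight a to q1 and b to q2 (the measure
   a dirac_q1 + b dirac_q2) *)
Definition split_value (M : Omega -> Omega -> R) (r : Omega -> R) (delta : R)
  (V : (Omega -> R) -> R) (a : R) (q1 : Omega -> R) (b : R) (q2 : Omega -> R) : R :=
  a * point_value M r delta V q1 + b * point_value M r delta V q2.

Definition combo (a : R) (q1 : Omega -> R) (b : R) (q2 : Omega -> R) : Omega -> R :=
  fun w => a * q1 w + b * q2 w.

End Defs.
Arguments simplex {Omega R}.
Arguments Iset {Omega R}.
Arguments BorelRO : clear implicits.

(* Main.v *)
Require Import Defs.
From HB Require Import structures.
From mathcomp Require Import all_boot all_order all_algebra.
From mathcomp Require Import all_classical all_reals all_analysis.
From mathcomp Require Import measurable_realfun.
From mathcomp Require Import ring lra.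
Import Order.TTheory GRing.Theory Num.Theory numFieldNormedType.Exports.
Local Open Scope classical_set_scope.
Local Open Scope ring_scope.

Definition mixp d (T : measurableType d) (R : realType) (a b : {nonneg R})
  (h : a%:num + b%:num = 1) (m1 m2 : probability T R) : set T -> \bar R :=
  measure_add (mscale a m1) (mscale b m2).
Arguments mixp {d T R a b} h m1 m2.

HB.instance Definition _ d (T : measurableType d) (R : realType) (a b : {nonneg R})
  (h : a%:num + b%:num = 1) (m1 m2 : probability T R) :=
  Measure.copy (mixp h m1 m2) (measure_add (mscale a m1) (mscale b m2)).

Lemma mixp_setT d (T : measurableType d) (R : realType) (a b : {nonneg R})
  (h : a%:num + b%:num = 1) (m1 m2 : probability T R) : mixp h m1 m2 setT = 1%E.
Proof.
by rewrite /mixp measure_addE/= /mscale/= !probability_setT !mule1 -EFinD h.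
Qed.
Arguments mixp_setT {d T R a b} h m1 m2.

HB.instance Definition _ d (T : measurableType d) (R : realType) (a b : {nonneg R})
  (h : a%:num + b%:num = 1) (m1 m2 : probability T R) :=
  Measure_isProbability.Build _ _ _ (mixp h m1 m2) (mixp_setT h m1 m2).


Lemma bnd_of d (T : measurableType d) (R : realType) (D : set T) (f : T -> R) (C : R) :
  (forall x, D x -> `|f x| <= C) -> [bounded f x | x in D].
Proof.
move=> hC; exists C; split; first exact: num_real.
by move=> M CM x Dx /=; apply: le_trans (hC x Dx) (ltW CM).
Qed.

Arguments bnd_of {d T R D f C}.

Lemma int_mscale d (T : measurableType d) (R : realType) (a : {nonneg R})
  (m : probability T R) (D : set T) (mD : measurable D) (f : T -> R) (C : R) :
  measurable_fun D f -> (forall x, D x -> `|f x| <= C) ->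
  (\int[mscale a m]_(x in D) (f x)%:E = a%:num%:E * \int[m]_(x in D) (f x)%:E)%E.
Proof.
move=> mf hC.
have intm : m.-integrable D (EFin \o f).
  apply: measurable_bounded_integrable => //; last exact: bnd_of hC.
  by apply: (le_lt_trans (probability_le1 m mD)); rewrite ltry.
have mfe : measurable_fun D (EFin \o f) by apply/measurable_EFinP.
have E1 : (\int[mscale a m]_(x in D) (EFin \o f)^\+ x =
    a%:num%:E * \int[m]_(x in D) (EFin \o f)^\+ x)%E.
  apply: ge0_integral_mscale => //; exact: measurable_funepos.
have E2 : (\int[mscale a m]_(x in D) (EFin \o f)^\- x =
    a%:num%:E * \int[m]_(x in D) (EFin \o f)^\- x)%E.
  apply: ge0_integral_mscale => //; exact: measurable_funeneg.
rewrite (integralE _ _ (EFin \o f)) [in RHS](integralE _ _ (EFin \o f)) E1 E2.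
have h1 := integrable_pos_fin_num mD intm.
have h2 := integrable_neg_fin_num mD intm.
rewrite [in RHS]muleBr //.
by rewrite fin_num_adde_defr // fin_numN.
Qed.
Arguments int_mscale {d T R} a m {D} mD {f C}.

Lemma int_mix d (T : measurableType d) (R : realType) (a b : {nonneg R})
  (h : a%:num + b%:num = 1) (m1 m2 : probability T R) (D : set T)
  (mD : measurable D) (f : T -> R) (C : R) :
  measurable_fun D f -> (forall x, D x -> `|f x| <= C) ->
  (\int[mixp h m1 m2]_(x in D) (f x)%:E =
   a%:num%:E * \int[m1]_(x in D) (f x)%:E + b%:num%:E * \int[m2]_(x in D) (f x)%:E)%E.
Proof.
move=> mf hC.
have intg (k : {nonneg R}) (m : probability T R) : (mscale k m).-integrable D (EFin \o f).
  apply: measurable_bounded_integrable => //; last exact: bnd_of hC.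
  change ((k%:num)%:E * m D < +oo)%E.
  apply: lte_mul_pinfty => //; apply: le_lt_trans (probability_le1 m mD) _; exact: ltry.
have -> : (\int[mixp h m1 m2]_(x in D) (f x)%:E =
   \int[measure_add (mscale a m1) (mscale b m2)]_(x in D) (f x)%:E)%E by [].
rewrite (integral_measure_add mD (intg a m1) (intg b m2)).
by rewrite (int_mscale a m1 mD mf hC) (int_mscale b m2 mD mf hC).
Qed.

Arguments int_mix {d T R a b} h m1 m2 {D} mD {f C}.

Lemma mcoordD (Omega : finType) (R : realType) (D : set (BorelRO Omega R))
  (ms : measurable D) w :
  measurable_fun D (fun q : BorelRO Omega R => q w).
Proof.
apply: (measurability _ (RGenOpens.measurableE R)) => _ [_ [x [y ->]] <-].
apply: measurableI => //; apply: sub_sigma_algebra.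
have hc0 : continuous (@proj Omega (fun _ => R) w : RO Omega R -> R) := @proj_continuous Omega (fun _ => R) w.
have hc := (continuousP _).1 hc0.
exact: (hc `]x, y[%classic (interval_open _ _)).
Qed.

Arguments mcoordD {Omega R D} ms w.

Lemma msimplex (Omega : finType) (R : realType) :
  measurable (simplex : set (BorelRO Omega R)).
Proof.
have mT : measurable (setT : set (BorelRO Omega R)) by exact: measurableT.
have mg : measurable_fun (setT : set (BorelRO Omega R))
    (fun q : BorelRO Omega R => \sum_(w <- index_enum Omega) q w).
  by apply: measurable_sum => w; exact: mcoordD.
have -> : (simplex : set (BorelRO Omega R)) =
  (\bigcap_(w in setT) (setT `&` (fun q : BorelRO Omega R => q w) @^-1` `[0, +oo[%classic))
  `&` (setT `&` (fun q : BorelRO Omega R => \sum_(w <- index_enum Omega) q w) @^-1` `[1, 1]%classic).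
  apply/seteqP; split => q /=.
    case=> q0 q1; split.
      by move=> w _; split => //=; rewrite in_itv /= andbT q0.
    by split => //=; rewrite in_itv /= q1 lexx.
  case=> hq [_ /=]; rewrite in_itv /= => /andP[s1 s2]; split.
    by move=> w; have [_ /=] := hq w I; rewrite in_itv /= andbT.
  by apply/eqP; rewrite eq_le s1 s2.
apply: measurableI.
  apply: fin_bigcap_measurable; first exact: finite_finset.
  by move=> w _; apply: (mcoordD mT w) => //; exact: measurable_itv.
by apply: mg => //; exact: measurable_itv.
Qed.

Lemma mcoord (Omega : finType) (R : realType)
  (ms : measurable (simplex : set (BorelRO Omega R))) w :
  measurable_fun (simplex : set (BorelRO Omega R)) (fun q : BorelRO Omega R => q w).
Proof. exact: mcoordD. Qed.

Lemma simplex_bnd (Omega : finType) (R : realType) (q : Omega -> R) w :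
  simplex q -> 0 <= q w <= 1.
Proof.
move=> [q0 q1]; rewrite q0 /= -q1 (bigD1 w) //= lerDl.
by apply: sumr_ge0 => i _.
Qed.

Arguments simplex_bnd {Omega R q} w.

Lemma simplex_combo (Omega : finType) (R : realType) (x y : Omega -> R) a b :
  simplex x -> simplex y -> 0 <= a -> 0 <= b -> a + b = 1 ->
  simplex (combo a x b y).
Proof.
move=> [x0 x1] [y0 y1] a0 b0 ab; split.
  by move=> w; rewrite /combo addr_ge0 // mulr_ge0.
by rewrite /combo big_split /= -!mulr_sumr x1 y1 !mulr1.
Qed.

Lemma phi_simplex (Omega : finType) (R : realType) (M : Omega -> Omega -> R) q :
  stochastic M -> simplex q -> simplex (phi M q).
Proof.
move=> [M0 M1] [q0 q1]; split.
  by move=> w; rewrite /phi; apply: sumr_ge0 => i _; rewrite mulr_ge0.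
rewrite /phi exchange_big /= -q1; apply: eq_bigr => i _.
by rewrite -mulr_sumr M1 mulr1.
Qed.

Lemma mIset (Omega : finType) (R : realType) (r : Omega -> R)
  (ms : measurable (simplex : set (BorelRO Omega R))) :
  measurable ((Iset r `&` simplex) : set (BorelRO Omega R)).
Proof.
have mg : measurable_fun (simplex : set (BorelRO Omega R))
    (fun q : BorelRO Omega R => \sum_(w <- index_enum Omega) q w * r w).
  apply: measurable_sum => w.
  by apply: measurable_funM; [exact: mcoord ms w | exact: measurable_cst].
have := mg ms `[0, +oo[%classic (measurable_itv _).
congr measurable; apply/seteqP; split => q /=.
  by case=> Sq; rewrite in_itv /= andbT => Iq; split.
by case=> Iq Sq; split => //=; rewrite in_itv /= andbT.
Qed.

Arguments mIset {Omega R} r ms.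
Arguments mcoord {Omega R} ms w.

Lemma payoff_fin (Omega : finType) (R : realType) (M : Omega -> Omega -> R)
  (r : Omega -> R) (delta : R) (V : (Omega -> R) -> R) (C : R)
  (ms : measurable (simplex : set (BorelRO Omega R)))
  (mV : measurable_fun (simplex : set (BorelRO Omega R)) (fun q => V (phi M q)))
  (hC : forall q, simplex q -> `|V (phi M q)| <= C)
  (mu : probability (BorelRO Omega R) R) :
  payoff M r delta V mu \is a fin_num.
Proof.
rewrite /payoff fin_numD; apply/andP; split; apply: fin_numM => //.
  rewrite ge0_fin_numE; last exact: measure_ge0.
  have h1 := probability_le1 mu (mIset r ms). apply: le_lt_trans h1 _. exact: ltry.
apply: (integrable_fin_num ms).
apply: measurable_bounded_integrable => //; last first. apply: bnd_of. exact: hC.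
by apply: le_lt_trans (probability_le1 mu ms) _; exact: ltry.
Qed.

Lemma dirac_Sp (Omega : finType) (R : realType)
  (ms : measurable (simplex : set (BorelRO Omega R))) (q : BorelRO Omega R) :
  simplex q -> Sp q (@dirac _ _ q R).
Proof.
move=> sq; split.
  by rewrite /= diracE mem_set.
move=> w; rewrite /= integral_dirac //; last by apply/measurable_EFinP; exact: mcoord.
by rewrite diracE mem_set // mul1e.
Qed.

Lemma dirac_pay (Omega : finType) (R : realType) (M : Omega -> Omega -> R)
  (r : Omega -> R) (delta : R) (V : (Omega -> R) -> R)
  (ms : measurable (simplex : set (BorelRO Omega R)))
  (mV : measurable_fun (simplex : set (BorelRO Omega R)) (fun q => V (phi M q)))
  (q : BorelRO Omega R) :
  simplex q -> payoff M r delta V (@dirac _ _ q R) = (point_value M r delta V q)%:E.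
Proof.
move=> sq; rewrite /payoff /= integral_dirac //; last by apply/measurable_EFinP.
rewrite !diracE (mem_set sq) mul1e /point_value.
have -> : (q \in Iset r `&` simplex) = inI r q.
  by apply/idP/idP => [/set_mem [] //|iq]; apply: mem_set.
by rewrite -!EFinM -EFinD.
Qed.

Lemma fin_meas d (T : measurableType d) (R : realType) (mu : probability T R) (A : set T) :
  measurable A -> exists u : R, mu A = u%:E.
Proof.
move=> mA; exists (fine (mu A)); rewrite fineK // ge0_fin_numE; last exact: measure_ge0.
by apply: le_lt_trans (probability_le1 mu mA) _; exact: ltry.
Qed.

Arguments fin_meas {d T R} mu {A}.

Lemma fin_int d (T : measurableType d) (R : realType) (mu : probability T R) (D : set T)
  (f : T -> R) (C : R) : measurable D -> measurable_fun D f ->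
  (forall x, D x -> `|f x| <= C) ->
  exists u : R, (\int[mu]_(x in D) (f x)%:E)%E = u%:E.
Proof.
move=> mD mf hC; exists (fine (\int[mu]_(x in D) (f x)%:E)%E); rewrite fineK //.
apply: (integrable_fin_num mD).
apply: measurable_bounded_integrable => //; last first. apply: bnd_of. exact: hC.
by apply: le_lt_trans (probability_le1 mu mD) _; exact: ltry.
Qed.

Arguments fin_int {d T R} mu {D f C}.

Lemma mix_Sp (Omega : finType) (R : realType)
  (ms : measurable (simplex : set (BorelRO Omega R)))
  (a b : {nonneg R}) (h : a%:num + b%:num = 1) (p1 p2 : Omega -> R)
  (m1 m2 : probability (BorelRO Omega R) R) :
  Sp p1 m1 -> Sp p2 m2 -> Sp (combo a%:num p1 b%:num p2) (mixp h m1 m2).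
Proof.
move=> [S1 I1] [S2 I2]; split.
  by rewrite /= /mixp measure_addE/= /mscale/= S1 S2 !mule1 -EFinD h.
move=> w.
rewrite (int_mix h m1 m2 ms (mcoord ms w) (C := 1)); last first.
  by move=> q /(simplex_bnd w) /andP[q0 q1]; rewrite ger0_norm.
by rewrite I1 I2 -!EFinM -EFinD.
Qed.

Lemma mix_pay (Omega : finType) (R : realType) (M : Omega -> Omega -> R)
  (r : Omega -> R) (delta : R) (V : (Omega -> R) -> R) (C : R)
  (ms : measurable (simplex : set (BorelRO Omega R)))
  (mV : measurable_fun (simplex : set (BorelRO Omega R)) (fun q => V (phi M q)))
  (hC : forall q, simplex q -> `|V (phi M q)| <= C)
  (a b : {nonneg R}) (h : a%:num + b%:num = 1)
  (m1 m2 : probability (BorelRO Omega R) R) :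
  payoff M r delta V (mixp h m1 m2) =
  (a%:num%:E * payoff M r delta V m1 + b%:num%:E * payoff M r delta V m2)%E.
Proof.
rewrite /payoff (int_mix h m1 m2 ms mV hC).
rewrite [in X in ((1 - delta)%:E * X + _)%E]/= /mixp measure_addE/= /mscale/=.
have [u1 ->] := fin_meas m1 (mIset r ms).
have [u2 ->] := fin_meas m2 (mIset r ms).
have [v1 ->] := fin_int m1 ms mV hC.
have [v2 ->] := fin_int m2 ms mV hC.
move: (a%:num) (b%:num) => A B. apply: (@congr1 _ _ (@EFin R)). ring.
Qed.

Arguments simplex_combo {Omega R x y a b}.
Arguments phi_simplex {Omega R M q}.
Arguments dirac_Sp {Omega R} ms {q}.
Arguments dirac_pay {Omega R M r delta V} ms mV {q}.
Arguments mix_Sp {Omega R} ms {a b} h {p1 p2 m1 m2}.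
Arguments mix_pay {Omega R M r delta V C} ms mV hC {a b} h m1 m2.
Arguments payoff_fin {Omega R M r delta V C} ms mV hC mu.

Theorem lemma7 (Omega : finType) (R : realType)
  (M : Omega -> Omega -> R) (r : Omega -> R) (delta : R)
  (V : (Omega -> R) -> R) (p qI qJ : Omega -> R) (aI aJ : R) :
  stochastic M -> irreducible M -> 0 <= delta -> delta < 1 ->
  DP_solution M r delta V ->
  (exists C : R, forall q, simplex q -> `|V q| <= C) ->
  measurable_fun (simplex : set (BorelRO Omega R)) (fun q => V (phi M q)) ->
  simplex p -> ~~ inI r p ->
  simplex qI -> simplex qJ ->
  0 < aI -> 0 < aJ -> aI + aJ = 1 ->
  p = combo aI qI aJ qJ ->
  V p = split_value M r delta V aI qI aJ qJ ->
  (forall t, 0 <= t <= 1 ->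
     V (combo t qI (1 - t) qJ) = t * V qI + (1 - t) * V qJ) /\
  (forall t, 0 <= t <= 1 ->
     V (combo t qI (1 - t) qJ) = split_value M r delta V t qI (1 - t) qJ).
Proof.
move=> hM _ d0 d1 DP [C hC0] mV sp _ sI sJ aI0 aJ0 aIJ pE Vp.
have ms := msimplex Omega R.
have hC : forall q, simplex q -> `|V (phi M q)| <= C.
  by move=> q sq; apply: hC0; exact: phi_simplex.
pose f := point_value M r delta V.
have LB : forall q, simplex q -> f q <= V q.
  move=> q sq; have [le _] := DP q sq.
  by have := le _ (dirac_Sp ms sq); rewrite (dirac_pay ms mV sq) lee_fin.
have MIX : forall (x y : Omega -> R) (l : R) m1 m2 u v, 0 <= l <= 1 ->
    simplex x -> simplex y -> Sp x m1 -> Sp y m2 ->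
    payoff M r delta V m1 = u%:E -> payoff M r delta V m2 = v%:E ->
    l * u + (1 - l) * v <= V (combo l x (1 - l) y).
  move=> x y l m1 m2 u v /andP[l0 l1] sx sy S1 S2 P1 P2.
  have l0' : 0 <= 1 - l by rewrite subr_ge0.
  have h : (NngNum l0)%:num + (NngNum l0')%:num = 1 by rewrite /= addrC subrK.
  have [le _] := DP _ (simplex_combo sx sy l0 l0' h).
  have := le _ (mix_Sp ms h S1 S2).
  rewrite (mix_pay ms mV hC h m1 m2) P1 P2 /=.
  have -> : ((l%:E * u%:E + (1 - l)%:E * v%:E) = (l * u + (1 - l) * v)%:E)%E by [].
  by rewrite lee_fin.
have Conc : forall (x y : Omega -> R) (l : R), 0 <= l <= 1 -> simplex x -> simplex y ->
    l * V x + (1 - l) * V y <= V (combo l x (1 - l) y).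
  move=> x y l hl sx sy.
  have [_ [m1 [S1 P1]]] := DP x sx.
  have [_ [m2 [S2 P2]]] := DP y sy.
  exact: MIX hl sx sy S1 S2 P1 P2.
have F1 : forall t, 0 <= t <= 1 ->
    t * f qI + (1 - t) * f qJ <= V (combo t qI (1 - t) qJ).
  move=> t ht.
  exact: MIX ht sI sJ (dirac_Sp ms sI) (dirac_Sp ms sJ) (dirac_pay ms mV sI) (dirac_pay ms mV sJ).
have aJE : aJ = 1 - aI by rewrite -aIJ addrC addKr.
have aI1 : aI <= 1 by rewrite -aIJ lerDl ltW.
have Vp' : V p = aI * f qI + (1 - aI) * f qJ by rewrite Vp /split_value aJE.
have Vpc : aI * V qI + (1 - aI) * V qJ <= V p.
  by rewrite pE aJE; apply: Conc => //; rewrite (ltW aI0).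
have LI := LB qI sI.
have LJ := LB qJ sJ.
have fI : f qI = V qI.
  apply/eqP; rewrite eq_le LI /=.
  have h1 : 0 <= (1 - aI) * (V qJ - f qJ) by apply: mulr_ge0; rewrite subr_ge0.
  have h2 : aI * (V qI - f qI) <= 0 by lra.
  by move: h2; rewrite pmulr_rle0 // subr_le0.
have fJ : f qJ = V qJ.
  apply/eqP; rewrite eq_le LJ /=.
  have h1 : 0 <= aI * (V qI - f qI) by apply: mulr_ge0; rewrite ?subr_ge0 // ltW.
  have h2 : (1 - aI) * (V qJ - f qJ) <= 0 by lra.
  by move: h2; rewrite pmulr_rle0 ?subr_le0 // -aJE.
pose L t := t * V qI + (1 - t) * V qJ.
have VpL : V p = L aI by rewrite Vp' fI fJ.
have UB : forall t, 0 <= t <= 1 -> V (combo t qI (1 - t) qJ) <= L t.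
  move=> t /andP[t0 t1].
  have sPt : simplex (combo t qI (1 - t) qJ).
    by apply: simplex_combo => //; [rewrite subr_ge0 | rewrite addrC subrK].
  have [taI|aIt] := leP t aI.
    have t1' : t < 1 by apply: le_lt_trans taI _; rewrite -aIJ ltrDl.
    have ht : 1 - t != 0 by rewrite subr_eq0 eq_sym lt_eqF.
    have tpos : 0 < 1 - t by rewrite subr_gt0.
    pose l := (1 - aI) / (1 - t).
    have l0 : 0 < l by rewrite divr_gt0 // subr_gt0 -aIJ ltrDl.
    have l1 : l <= 1 by rewrite ler_pdivrMr // mul1r lerD2l lerN2.
    have hl : 0 <= l <= 1 by rewrite (ltW l0) l1.
    have hc := Conc _ _ l hl sPt sI.
    have E : combo l (combo t qI (1 - t) qJ) (1 - l) qI = p.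
      rewrite pE aJE; apply/funext => w; rewrite /combo /l.
      by field.
    have K : L aI = l * L t + (1 - l) * V qI.
      by rewrite /L /l; field.
    rewrite E VpL K in hc.
    have : l * V (combo t qI (1 - t) qJ) <= l * L t by lra.
    by rewrite ler_pM2l.
  have tpos : 0 < t by apply: lt_trans aIt.
  have ht : t != 0 by rewrite gt_eqF.
  pose l := aI / t.
  have l0 : 0 < l by rewrite divr_gt0.
  have l1 : l <= 1 by rewrite ler_pdivrMr // mul1r ltW.
  have hl : 0 <= l <= 1 by rewrite (ltW l0) l1.
  have hc := Conc _ _ l hl sPt sJ.
  have E : combo l (combo t qI (1 - t) qJ) (1 - l) qJ = p.
    rewrite pE aJE; apply/funext => w; rewrite /combo /l.
    by field.
  have K : L aI = l * L t + (1 - l) * V qJ.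
    by rewrite /L /l; field.
  rewrite E VpL K in hc.
  have : l * V (combo t qI (1 - t) qJ) <= l * L t by lra.
  by rewrite ler_pM2l.
split=> t ht.
  apply/eqP; rewrite eq_le UB //=.
  by have := F1 t ht; rewrite fI fJ.
have -> : split_value M r delta V t qI (1 - t) qJ = L t by rewrite /split_value -/f fI fJ.
apply/eqP; rewrite eq_le UB //=.
by have := F1 t ht; rewrite fI fJ.
Qed.
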